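(* For all nonnegative nonzero vectors $x,y\in\mathbb{R}^n$, $|\sin(x,y)|\le D(x,y)$.
   Context: $\sin(x,y)$ is the sine of the angle between $x$ and $y$, and $$D(x,y)=\frac{\left\|\frac{y}{\|y\|_1}-\frac{x}{\|x\|_1}\right\|_2}{\left\|\frac{y}{\|y\|_1}\right\|_2}.$$ *)

(* Defs.v *)
From HB Require Import structures.
From mathcomp Require Import all_boot all_order all_algebra.
From mathcomp Require Import all_classical all_reals all_analysis.
Set Implicit Arguments. Unset Strict Implicit. Unset Printing Implicit Defensive.
Import Order.TTheory GRing.Theory Num.Theory.
Local Open Scope ring_scope.

Section Defs.
Variables (R : realType) (n : nat).

Definition norm1 (x : 'rV[R]_n) : R := \sum_(i < n) `|x 0 i|.
Definition dotv (x y : 'rV[R]_n) : R := \sum_(i < n) x 0 i * y 0 i.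
Definition norm2 (x : 'rV[R]_n) : R := Num.sqrt (dotv x x).

Definition nonneg_vec (x : 'rV[R]_n) : Prop := forall i, 0 <= x 0 i.

Definition angle (x y : 'rV[R]_n) : R := acos (dotv x y / (norm2 x * norm2 y)).
Definition sin_angle (x y : 'rV[R]_n) : R := sin (angle x y).

Definition Dxy (x y : 'rV[R]_n) : R :=
  norm2 ((norm1 y)^-1 *: y - (norm1 x)^-1 *: x) / norm2 ((norm1 y)^-1 *: y).
End Defs.

(* Main.v *)
Require Import Defs.
From HB Require Import structures.
From mathcomp Require Import all_boot all_order all_algebra.
From mathcomp Require Import all_classical all_reals all_analysis.
From mathcomp Require Import ring lra.
Import Order.TTheory GRing.Theory Num.Theory.
Local Open Scope ring_scope.

Set Implicit Arguments.
Section H.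
Variables (R : realType) (n : nat).
Implicit Types (p q z : 'rV[R]_n).

Lemma dotvC p q : dotv p q = dotv q p.
Proof. by rewrite /dotv; apply: eq_bigr => i _; rewrite mulrC. Qed.

Lemma dotv_ge0 z : 0 <= dotv z z.
Proof. by rewrite /dotv; apply: sumr_ge0 => i _; rewrite -expr2 sqr_ge0. Qed.

Lemma dotv_gt0 z : z != 0 -> 0 < dotv z z.
Proof.
move=> nz; rewrite lt_neqAle dotv_ge0 andbT eq_sym; apply: contra nz => /eqP H.
have H2 : forall i, true -> z 0 i * z 0 i = 0.
  by apply: psumr_eq0P H => i _; rewrite -expr2 sqr_ge0.
apply/eqP/rowP => i; rewrite mxE.
by have /eqP := H2 i isT; rewrite mulf_eq0 orbb => /eqP.
Qed.

Lemma norm1_gt0 z : z != 0 -> 0 < norm1 z.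
Proof.
move=> nz; rewrite lt_neqAle eq_sym andbC /norm1 sumr_ge0 //=; apply: contra nz => /eqP H.
have H2 := psumr_eq0P (fun i _ => normr_ge0 (z 0 i)) H.
apply/eqP/rowP => i; rewrite mxE.
by have /eqP := H2 i isT; rewrite normr_eq0 => /eqP.
Qed.

Lemma dotv_expand a b p q :
  dotv (a *: p + b *: q) (a *: p + b *: q) =
  a ^+ 2 * dotv p p + 2 * a * b * dotv p q + b ^+ 2 * dotv q q.
Proof.
rewrite /dotv !mulr_sumr -!big_split /=; apply: eq_bigr => i _.
rewrite !mxE; ring.
Qed.
End H.
Lemma key (R : realType) (X Y U s t : R) : X != 0 -> Y != 0 ->
  s ^+ 2 * Y + 2 * s * - t * U + (- t) ^+ 2 * X -
   (1 - U ^+ 2 / (X * Y)) * (s ^+ 2 * Y) = (s * U - t * X) ^+ 2 / X.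
Proof. by move=> hX hY; field; rewrite hX hY. Qed.
Arguments dotv_gt0 {R n z}.
Arguments norm1_gt0 {R n z}.
Arguments dotv_ge0 {R n}.
Arguments dotvC {R n}.
Arguments dotv_expand {R n}.

Theorem lemmaA3 (R : realType) (n : nat) (x y : 'rV[R]_n) :
  nonneg_vec x -> nonneg_vec y -> x != 0 -> y != 0 ->
  `|sin_angle x y| <= Dxy x y.
Proof.
move=> _ _ nx ny.
have X0 := dotv_gt0 nx; have Y0 := dotv_gt0 ny.
have s0 := norm1_gt0 ny; have t0 := norm1_gt0 nx.
set X := dotv x x in X0 *; set Y := dotv y y in Y0 *.
set U := dotv x y.
have CS : U ^+ 2 <= X * Y.
  have := dotv_ge0 (X *: y + (- U) *: x).
  rewrite dotv_expand dotvC -/U -/X -/Y => h.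
  have : 0 <= X * (X * Y - U ^+ 2).
    by have -> : X * (X * Y - U ^+ 2) = X ^+ 2 * Y + 2 * X * - U * U + (- U) ^+ 2 * X by ring.
  by rewrite pmulr_rge0 // subr_ge0.
rewrite /sin_angle /angle /Dxy /norm2 -/X -/Y -/U.
set c := U / _.
have sX := sqrtr_gt0 X; have sY := sqrtr_gt0 Y.
have c2 : c ^+ 2 = U ^+ 2 / (X * Y).
  by rewrite /c expr_div_n exprMn !sqr_sqrtr ?ltW.
have c1 : c ^+ 2 <= 1 by rewrite c2 ler_pdivrMr ?mul1r ?mulr_gt0.
have cb : -1 <= c <= 1.
  by rewrite -ler_norml -(@ler_pXn2r _ 2) ?normr_ge0 ?nnegrE ?normr_ge0 // expr1n real_normK ?num_real.
rewrite sin_acos // ger0_norm ?sqrtr_ge0 //.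
set s := (norm1 y)^-1; set t := (norm1 x)^-1.
have sp : 0 < s by rewrite invr_gt0. have tp : 0 < t by rewrite invr_gt0.
have -> : dotv (s *: y) (s *: y) = s ^+ 2 * Y.
  by rewrite -[s *: y]addr0 -[X in _ + X](scale0r x) dotv_expand /Y; ring.
have -> : s *: y - t *: x = s *: y + (- t) *: x by rewrite scaleNr.
rewrite dotv_expand dotvC -/U -/X -/Y.
have sYp : 0 < Num.sqrt (s ^+ 2 * Y) by rewrite sqrtr_gt0 mulr_gt0 ?exprn_gt0.
rewrite ler_pdivlMr // -sqrtrM ?subr_ge0 // ler_sqrt; last first.
  by move: (dotv_ge0 (s *: y + (- t) *: x)); rewrite dotv_expand (dotvC y x).
rewrite c2 -subr_ge0.
have -> : s ^+ 2 * Y + 2 * s * - t * U + (- t) ^+ 2 * X -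
   (1 - U ^+ 2 / (X * Y)) * (s ^+ 2 * Y) = (s * U - t * X) ^+ 2 / X.
  by apply: key; rewrite gt_eqF.
by rewrite divr_ge0 ?sqr_ge0 ?ltW.
Qed.
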